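(* Let $(X,\mathtt{d})$ be an instance of metric $k$-center clustering with $z$ outliers, $|X|=n$, $\gamma=z/n$, and $\epsilon>0$. If Algorithm 2 (described in the context) is run independently $O\!\left(\frac{1}{1-\gamma}\left(\frac{1+\epsilon}{\epsilon}\right)^{k-1}\right)$ times, then with constant probability at least one of the runs returns a $2$-approximation for $(k,z)_\epsilon$-center clustering on $X$, i.e.\ a set $E$ of $k$ vertices with $\phi_\epsilon(X,E)\leq 2r_{\mathtt{opt}}$.
   Context: Let $(X,\mathtt{d})$ be a finite metric space with $|X|=n$ and let $k,z$ be positive integers with $z<n$. The $k$-center clustering with $z$ outliers problem asks for $X'\subseteq X$ with $|X'|\geq n-z$ and centers $c_1,\dots,c_k\in X$ minimizing $\max_{p\in X'}\min_j\mathtt{d}(p,c_j)$; $r_{\mathtt{opt}}$ is the optimal value. For $\epsilon\geq0$ and $A\subseteq X$, $\phi_\epsilon(X,A)=\min\{\max_{p\in X'}\min_{c\in A}\mathtt{d}(p,c)\;:\;X'\subseteq X,\ |X'|\geq n-(1+\epsilon)z\}$; $\mathtt{d}(p,E)=\min_{q\in E}\mathtt{d}(p,q)$. Algorithm 2 (input $(X,\mathtt{d})$, $k$, $z$, $\epsilon>0$): Let $E=\emptyset$; set $j=1$ and add one vertex selected uniformly at random from $X$ to $E$. While $j<k$: set $j=j+1$; let $Q_j$ be the set of the $(1+\epsilon)z$ vertices of $X$ farthest from $E$; add one vertex selected uniformly at random from $Q_j$ to $E$. Output $E$. *)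

(* Defs.v *)
From HB Require Import structures.
From mathcomp Require Import all_boot all_order all_algebra.
Set Implicit Arguments. Unset Strict Implicit. Unset Printing Implicit Defensive.
Import Order.TTheory GRing.Theory Num.Theory.
Local Open Scope ring_scope.

Section KCenter.
Variables (R : archiRealFieldType) (X : finType) (d : X -> X -> R).

Definition is_metric : Prop :=
  [/\ forall p q, 0 <= d p q,
      forall p q, (d p q == 0) = (p == q),
      forall p q, d p q = d q p &
      forall p q r, d p r <= d p q + d q r].

Definition distE (p : X) (E : seq X) : R :=
  \big[Num.min/d p (head p E)]_(q <- E) d p q.

(* diameter of X: an upper bound for all the radii below, used as the
   neutral value of the finite minima (which always range over a nonempty
   index set) *)
Definition diam : R := \big[Num.max/0]_(p : X) \big[Num.max/0]_(q : X) d p q.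

Definition radius (A : seq X) (X' : {set X}) : R :=
  \big[Num.max/0]_(p in X') distE p A.

Definition phi_eps (z : nat) (eps : R) (A : seq X) : R :=
  \big[Num.min/diam]_(X' : {set X} |
       (#|X|%:R - (1 + eps) * z%:R <= (#|X'|%:R : R))) radius A X'.

(* r_opt : optimal value of k-center with z outliers (centers c_1..c_k in X,
   possibly repeated, i.e. a nonempty set of at most k centers) *)
Definition r_opt (k z : nat) : R :=
  \big[Num.min/diam]_(C : {set X} | (0 < #|C|)%N && (#|C| <= k)%N)
    \big[Num.min/diam]_(X' : {set X} | (#|X| - z <= #|X'|)%N)
       radius (enum C) X'.

Definition qsize (z : nat) (eps : R) : nat :=
  minn #|X| `|Num.ceil ((1 + eps) * z%:R)|%N.

(* Q is a valid rule for "the (1+eps)z vertices of X farthest from E":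
   for every (nonempty) current E, Q E has the right size and every vertex
   of Q E is at least as far from E as every vertex outside Q E.
   (Ties are broken arbitrarily by Q.) *)
Definition farthest_rule (z : nat) (eps : R) (Q : seq X -> {set X}) : Prop :=
  forall E : seq X, E != [::] ->
    #|Q E| = qsize z eps /\
    (forall p q, p \in Q E -> q \notin Q E -> distE q E <= distE p E).

Definition good (k z : nat) (eps : R) (E : seq X) : bool :=
  phi_eps z eps E <= 2 * r_opt k z.

(* probability that, from the current center list E, performing j more
   iterations of the while loop ends with a good E *)
Fixpoint succ_from (k z : nat) (eps : R) (Q : seq X -> {set X}) (j : nat)
    (E : seq X) : R :=
  match j with
  | 0 => if good k z eps E then 1 else 0
  | j'.+1 => #|Q E|%:R^-1 *
             \sum_(x in Q E) succ_from k z eps Q j' (x :: E)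
  end.

(* probability that one run of Algorithm 2 returns a good E:
   first center uniform in X, then k-1 iterations *)
Definition alg2_success (k z : nat) (eps : R) (Q : seq X -> {set X}) : R :=
  #|X|%:R^-1 * \sum_(x : X) succ_from k z eps Q k.-1 [:: x].

End KCenter.

(* Main.v *)
Require Import Defs.
From HB Require Import structures.
From mathcomp Require Import all_boot all_order all_algebra.
From mathcomp Require Import ring lra zify.
Set Implicit Arguments. Unset Strict Implicit. Unset Printing Implicit Defensive.
Import Order.TTheory GRing.Theory Num.Theory.
Local Open Scope ring_scope.

Section Basic.
Variables (R : archiRealFieldType) (X : finType) (d : X -> X -> R).
Hypothesis dm : is_metric d.

Lemma d_ge0 p q : 0 <= d p q. Proof. by case: dm. Qed.
Lemma d_sym p q : d p q = d q p. Proof. by case: dm. Qed.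
Lemma d_tri p q r : d p r <= d p q + d q r. Proof. by case: dm. Qed.

Lemma distE_le p E e : e \in E -> distE d p E <= d p e.
Proof. by move=> eE; rewrite /distE; apply: ge_bigmin_seq. Qed.

Lemma distE_ex p E : E != [::] -> exists2 e, e \in E & distE d p E = d p e.
Proof.
case: E => // h t _; rewrite /distE big_seq.
apply: (big_ind (fun y => exists2 e, e \in h :: t & y = d p e)).
- by exists h => //; rewrite inE eqxx.
- move=> a b [e1 H1 ->] [e2 H2 ->]; rewrite minEle.
  by case: ifP => _; [exists e1|exists e2].
- by move=> i iE; exists i.
Qed.

Lemma distE_ge0 p E : 0 <= distE d p E.
Proof. by apply: le_bigmin => [|i _]; apply: d_ge0. Qed.

Lemma distE_cons p x E : E != [::] -> distE d p (x :: E) <= distE d p E.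
Proof.
move=> E0; have [e eE ->] := distE_ex p E0.
by apply: distE_le; rewrite inE eE orbT.
Qed.

Lemma distE_diam p A : distE d p A <= diam d.
Proof.
have H1 := bigmin_le_id A (d p (head p A)) xpredT (fun q => d p q).
rewrite /distE; apply: (le_trans H1).
rewrite /diam.
apply: (le_trans _ (le_bigmax _ _ p)).
exact: (le_bigmax _ (fun q => d p q) (head p A)).
Qed.

Lemma diam_ge0 : 0 <= diam d.
Proof. exact: bigmax_ge_id. Qed.

Lemma radius_diam A (S : {set X}) : radius d A S <= diam d.
Proof. by apply: bigmax_le; [exact: diam_ge0|move=> i _; exact: distE_diam]. Qed.

Lemma radius_ge0 A (S : {set X}) : 0 <= radius d A S.
Proof. exact: bigmax_ge_id. Qed.

Lemma radius_le A (S : {set X}) m : 0 <= m -> (forall p, p \in S -> distE d p A <= m) ->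
  radius d A S <= m.
Proof. by move=> m0 H; apply: bigmax_le. Qed.

Lemma le_radius A (S : {set X}) p : p \in S -> distE d p A <= radius d A S.
Proof. by move=> pS; apply: (le_bigmax_cond _ (fun p => distE d p A) pS). Qed.

Lemma radius_cons x E (S : {set X}) : E != [::] -> radius d (x :: E) S <= radius d E S.
Proof. by move=> E0; apply: le_bigmax2 => p _; exact: distE_cons. Qed.

Lemma phi_le z eps A (S : {set X}) : (#|X|%:R - (1 + eps) * z%:R <= (#|S|%:R : R)) ->
  phi_eps d z eps A <= radius d A S.
Proof. by move=> HS; apply: (bigmin_le_cond _ (fun S => radius d A S) HS). Qed.

Lemma phi_cons z eps x E : E != [::] -> phi_eps d z eps (x :: E) <= phi_eps d z eps E.
Proof. by move=> E0; apply: le_bigmin2 => S _; exact: radius_cons. Qed.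

Lemma ropt_wit k z : (0 < k)%N -> (0 < #|X|)%N ->
  exists C : {set X}, exists S : {set X},
  [/\ (0 < #|C|)%N, (#|C| <= k)%N, (#|X| - z <= #|S|)%N &
      radius d (enum C) S = r_opt d k z].
Proof.
move=> k0 /card_gt0P [x0 _].
have PC0 : (0 < #|[set x0]|)%N && (#|[set x0]| <= k)%N by rewrite cards1.
rewrite /r_opt.
have [C PC ->] := @eq_bigmin _ _ _ (diam d) [set x0]
  (fun C : {set X} => (0 < #|C|)%N && (#|C| <= k)%N)
  (fun C => \big[Num.min/diam d]_(S : {set X} | (#|X| - z <= #|S|)%N) radius d (enum C) S)
  PC0 (fun C _ => bigmin_le_id _ _ _ _).
have PS0 : (#|X| - z <= #|[set: X]|)%N by rewrite cardsT leq_subr.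
have [S PS ->] := @eq_bigmin _ _ _ (diam d) [set: X]
  (fun S : {set X} => (#|X| - z <= #|S|)%N) (fun S => radius d (enum C) S)
  PS0 (fun S _ => radius_diam (enum C) S).
move: PC; rewrite unfold_in => /andP[C1 C2].
by exists C, S; split.
Qed.

End Basic.
Section Main.
Variables (R : archiRealFieldType) (X : finType) (d : X -> X -> R) (k z : nat)
  (eps : R) (Q : seq X -> {set X}).
Hypotheses (dm : is_metric d) (k0 : (0 < k)%N) (z0 : (0 < z)%N)
  (zn : (z < #|X|)%N) (eps0 : 0 < eps) (FR : farthest_rule d z eps Q).
Variables (C S : {set X}).
Hypotheses (C0 : (0 < #|C|)%N) (Ck : (#|C| <= k)%N) (Sz : (#|X| - z <= #|S|)%N)
  (rS : radius d (enum C) S = r_opt d k z).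

Local Notation r := (r_opt d k z).
Local Ltac lra' := let h := fresh "he" in have h := eps0; lra.
Local Ltac nra' := let h := fresh "he" in have h := eps0; nra.

Local Notation good := (good d k z eps).

Definition H (E : seq X) := [set c in C | has (fun e => d c e <= r) E].

Lemma r_ge0 : 0 <= r. Proof. by rewrite -rS radius_ge0. Qed.

Lemma inlier_center x : x \in S -> exists2 c, c \in C & d x c <= r.
Proof.
move=> xS.
have E0 : enum C != [::] by rewrite -size_eq0 -cardE -lt0n.
have [c cE dc] := distE_ex d x E0.
exists c; first by rewrite -mem_enum.
by rewrite -dc -rS le_radius.
Qed.

Lemma goodH E : (#|C| <= #|H E|)%N -> good E.
Proof.
move=> hc.
have HC : H E = C.
  apply/eqP; rewrite eqEcard hc andbT; apply/subsetP => c.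
  by rewrite inE => /andP[].
rewrite /good; apply: (le_trans (@phi_le _ _ d z eps E S _)).
  have h : (#|X| <= #|S| + z)%N by lia.
  move: h; rewrite -(ler_nat R) natrD => h.
  have ez : 0 <= eps * z%:R by apply: mulr_ge0; [exact: ltW|exact: ler0n].
  lra'.
have r0 := r_ge0.
apply: radius_le => [|p pS]; first lra'.
have [c cC dpc] := inlier_center pS.
move: cC; rewrite -{1}HC inE => /andP[_ /hasP[e eE dce]].
apply: (le_trans (distE_le d _ eE)).
apply: (le_trans (d_tri dm p c e)); lra'.
Qed.

Lemma good_cons x E : E != [::] -> good E -> good (x :: E).
Proof. by move=> E0; rewrite /good; apply: le_trans; apply: phi_cons. Qed.

Local Notation xq := ((1 + eps) * z%:R).

Lemma eps1 : 0 < 1 + eps. Proof. lra'. Qed.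

Lemma xq_gt0 : 0 < xq.
Proof. apply: mulr_gt0; [exact: eps1 | by rewrite ltr0n]. Qed.

Lemma absceil : (`|Num.ceil xq|%N)%:R = (Num.ceil xq)%:~R :> R.
Proof.
rewrite natr_absz ger0_norm //.
by rewrite ceil_ge0; have := xq_gt0; lra'.
Qed.

Lemma qsize_pos : (0 < qsize X z eps)%N.
Proof.
rewrite /qsize leq_min; apply/andP; split; first lia.
by rewrite absz_gt0 gt_eqF // ceil_gt0 xq_gt0.
Qed.

Lemma qsize_lt : (qsize X z eps)%:R < xq + 1.
Proof.
apply: (le_lt_trans (y := (`|Num.ceil xq|%N)%:R)).
  by rewrite ler_nat /qsize geq_minr.
rewrite absceil; have := ceilB1_lt xq; rewrite intrB /=; lra'.
Qed.

Lemma qsize_ge E : ~~ good E -> xq <= (qsize X z eps)%:R.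
Proof.
move=> ng.
case: (leqP #|X| `|Num.ceil xq|%N) => h.
  have -> : qsize X z eps = #|X| by exact: minn_idPl h.
  rewrite leNgt; apply/negP => lt; move/negP: ng; apply.
  rewrite /good; apply: (le_trans (@phi_le _ _ d z eps E set0 _)).
    by rewrite cards0 /=; move: lt; lra'.
  have r0 := r_ge0.
  by apply: radius_le => [|p]; [lra | rewrite in_set0].
have -> : qsize X z eps = `|Num.ceil xq|%N by exact: minn_idPr (ltnW h).
rewrite absceil; exact: ceil_ge.
Qed.

Lemma Q_far E p : E != [::] -> ~~ good E -> p \in Q E -> 2 * r < distE d p E.
Proof.
move=> E0 ng pQ; rewrite ltNge; apply/negP => hp; move/negP: ng; apply.
have [Qc Qf] := FR E0.
pose T := [set y | distE d y E <= 2 * r].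
have sub : p |: ~: Q E \subset T.
  apply/subsetP => y; rewrite !inE => /orP[/eqP->|yQ] //.
  exact: le_trans (Qf p y pQ yQ) hp.
have cT := subset_leq_card sub.
rewrite cardsU1 inE pQ /= in cT.
have cC := cardsC (Q E).
have hn : (#|X| + 1 <= #|T| + #|Q E|)%N by lia.
move: hn; rewrite -(ler_nat R) !natrD Qc => hn.
have hl := qsize_lt.
rewrite /good; apply: (le_trans (@phi_le _ _ d z eps E T _)).
  by move: hn hl; lra'.
have r0 := r_ge0.
by apply: radius_le => [|y]; [lra | rewrite inE].
Qed.

Lemma inlier_count E : (#|Q E| <= #|Q E :&: S| + z)%N.
Proof.
have h1 := cardsID S (Q E).
have h2 : (#|Q E :\: S| <= #|~: S|)%N.
  by apply: subset_leq_card; rewrite setDE subsetIr.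
have h3 := cardsC S.
lia.
Qed.

Lemma hit_inc E x : E != [::] -> ~~ good E -> x \in Q E -> x \in S ->
  (#|H E| < #|H (x :: E)|)%N.
Proof.
move=> E0 ng xQ xS; apply: proper_card; apply/properP; split.
  apply/subsetP => c; rewrite !inE => /andP[-> /=] h.
  by rewrite h orbT.
have [c cC dxc] := inlier_center xS.
exists c; first by rewrite inE cC /= d_sym // dxc.
rewrite inE cC /=; apply/hasP => -[e eE dce].
have hf := Q_far E0 ng xQ.
have h1 := distE_le d x eE.
have h2 := d_tri dm x c e.
lra'.
Qed.

Lemma succ_bounds j E : 0 <= succ_from d k z eps Q j E <= 1.
Proof.
elim: j E => [|j IH] E /=; first by case: ifP => _; rewrite ?ler01 ?lexx.
apply/andP; split.
  apply: mulr_ge0; first by rewrite invr_ge0 ler0n.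
  by apply: sumr_ge0 => x _; case/andP: (IH (x :: E)).
have hs : \sum_(x in Q E) succ_from d k z eps Q j (x :: E) <= #|Q E|%:R.
  rewrite -[X in _ <= X]mulr1 mulr_natl -sumr_const.
  by apply: ler_sum => x _; case/andP: (IH (x :: E)).
have i0 : 0 <= (#|Q E|%:R : R)^-1 by rewrite invr_ge0 ler0n.
apply: (le_trans (ler_wpM2l i0 hs)).
have [->|m0] := eqVneq #|Q E| 0%N; first by rewrite invr0 mul0r.
by rewrite mulVf // pnatr_eq0.
Qed.

Lemma succ_good j E : E != [::] -> good E -> succ_from d k z eps Q j E = 1.
Proof.
elim: j E => [|j IH] E E0 g /=; first by rewrite g.
rewrite (eq_bigr (fun _ => 1)) => [|x _]; last by apply: IH => //; exact: good_cons.
have [Qc _] := FR E0.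
rewrite sumr_const mulVf // pnatr_eq0 Qc -lt0n; exact: qsize_pos.
Qed.

Local Notation q := (eps / (1 + eps)).

Lemma q_ge0 : 0 <= q.
Proof. by apply: divr_ge0; apply: ltW; [exact: eps0 | exact: eps1]. Qed.

Lemma q_le1 : q <= 1.
Proof. by rewrite ler_pdivrMr ?mul1r ?eps1 //; lra'. Qed.

Lemma main j E : E != [::] -> (#|C| <= #|H E| + j)%N ->
  q ^+ j <= succ_from d k z eps Q j E.
Proof.
elim: j E => [|j IH] E E0 hc.
  by rewrite addn0 in hc; rewrite /= goodH // expr0.
case g: (good E).
  by rewrite succ_good // exprn_ile1 // ?q_ge0 ?q_le1.
have ng : ~~ good E by rewrite g.
rewrite /=.
have [Qc _] := FR E0.
set m := #|Q E|.
set a := #|Q E :&: S|.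
have qj0 : 0 <= q ^+ j by apply: exprn_ge0; exact: q_ge0.
have step : a%:R * q ^+ j <= \sum_(x in Q E) succ_from d k z eps Q j (x :: E).
  rewrite (bigID (fun x => x \in S)) /=.
  have h2 : 0 <= \sum_(i in Q E | i \notin S) succ_from d k z eps Q j (i :: E).
    by apply: sumr_ge0 => x _; case/andP: (succ_bounds j (x :: E)).
  have h1 : a%:R * q ^+ j <= \sum_(i in Q E | i \in S) succ_from d k z eps Q j (i :: E).
    have -> : a%:R * q ^+ j = \sum_(i in Q E | i \in S) q ^+ j.
      rewrite mulr_natl.
      have -> : \sum_(i in Q E | i \in S) q ^+ j = \sum_(i in Q E :&: S) q ^+ j.
        by apply: eq_bigl => x; rewrite inE.
      by rewrite sumr_const.
    apply: ler_sum => x /andP[xQ xS]; apply: IH => //.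
    have := hit_inc E0 ng xQ xS; lia.
  lra'.
have m0 : 0 < m%:R :> R by rewrite ltr0n /m Qc qsize_pos.
have hge : xq <= m%:R by rewrite /m Qc; exact: (qsize_ge ng).
have hin : m%:R <= a%:R + z%:R :> R by rewrite -natrD ler_nat; exact: inlier_count.
have hq : q <= a%:R / m%:R.
  rewrite ler_pdivlMr // mulrAC ler_pdivrMr; last exact: eps1.
  have e1 : 0 <= eps * (a%:R + z%:R - m%:R) by apply: mulr_ge0; [apply: ltW|]; lra'.
  nra'.
apply: (le_trans _ (ler_wpM2l _ step)); last by rewrite invr_ge0 ler0n.
rewrite exprSr.
apply: (le_trans (ler_wpM2l qj0 hq)).
rewrite le_eqVlt; apply/orP; left; apply/eqP; ring.
Qed.


Lemma alg_lb : (1 - z%:R / #|X|%:R) * q ^+ k.-1 <= alg2_success d k z eps Q.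
Proof.
rewrite /alg2_success.
have n0 : 0 < #|X|%:R :> R by rewrite ltr0n; lia.
have qk0 : 0 <= q ^+ k.-1 by apply: exprn_ge0; exact: q_ge0.
have step : #|S|%:R * q ^+ k.-1 <= \sum_(x : X) succ_from d k z eps Q k.-1 [:: x].
  rewrite (bigID (fun x => x \in S)) /=.
  have h2 : 0 <= \sum_(i | i \notin S) succ_from d k z eps Q k.-1 [:: i].
    by apply: sumr_ge0 => x _; case/andP: (succ_bounds k.-1 [:: x]).
  have h1 : #|S|%:R * q ^+ k.-1 <= \sum_(i | i \in S) succ_from d k z eps Q k.-1 [:: i].
    rewrite mulr_natl -sumr_const; apply: ler_sum => x xS; apply: main => //.
    have [c cC dxc] := inlier_center xS.
    have : (0 < #|H [:: x]|)%N.
      by apply/card_gt0P; exists c; rewrite inE cC /= d_sym // dxc.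
    lia.
  lra'.
have i0 : 0 <= (#|X|%:R : R)^-1 by rewrite invr_ge0 ler0n.
apply: (le_trans _ (ler_wpM2l i0 step)).
have e : 1 - z%:R / #|X|%:R = (#|X|%:R : R)^-1 * (#|X|%:R - z%:R).
  by field; rewrite pnatr_eq0 -lt0n; lia.
have hs : #|X|%:R - z%:R <= #|S|%:R :> R.
  have h : (#|X| <= #|S| + z)%N by lia.
  move: h; rewrite -(ler_nat R) natrD => h; lra'.
rewrite e -mulrA; apply: ler_wpM2l => //; apply: ler_wpM2r => //.
Qed.

Lemma alg_ub : 0 <= alg2_success d k z eps Q <= 1.
Proof.
rewrite /alg2_success; apply/andP; split.
  apply: mulr_ge0; first by rewrite invr_ge0 ler0n.
  by apply: sumr_ge0 => x _; case/andP: (succ_bounds k.-1 [:: x]).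
have hs : \sum_(x : X) succ_from d k z eps Q k.-1 [:: x] <= #|X|%:R.
  rewrite -[X in _ <= X]mulr1 mulr_natl -sumr_const.
  by apply: ler_sum => x _; case/andP: (succ_bounds k.-1 [:: x]).
have i0 : 0 <= (#|X|%:R : R)^-1 by rewrite invr_ge0 ler0n.
apply: (le_trans (ler_wpM2l i0 hs)).
by rewrite mulVf // pnatr_eq0 -lt0n; lia.
Qed.

End Main.

Lemma bern (R : realFieldType) (p : R) (T : nat) : 0 <= p -> p <= 1 ->
  (1 - p) ^+ T * (1 + T%:R * p) <= 1.
Proof.
move=> p0 p1; elim: T => [|T IH]; first by rewrite expr0 mul0r addr0 mulr1.
rewrite exprS -mulrA; apply: le_trans IH.
rewrite mulrCA; apply: ler_wpM2l; first by apply: exprn_ge0; lra.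
rewrite -addn1 natrD.
have t0 : 0 <= T%:R :> R by exact: ler0n.
have h : 0 <= (T%:R + 1) * (p * p) by apply: mulr_ge0; nra.
nra.
Qed.

Theorem corollary9 (R : archiRealFieldType) :
  exists (C c : R), 0 < C /\ 0 < c /\
  forall (X : finType) (d : X -> X -> R) (k z : nat) (eps : R)
         (Q : seq X -> {set X}) (T : nat),
    is_metric d -> (0 < k)%N -> (0 < z)%N -> (z < #|X|)%N -> 0 < eps ->
    farthest_rule d z eps Q ->
    C * (1 - z%:R / #|X|%:R)^-1 * ((1 + eps) / eps) ^+ k.-1 <= T%:R ->
    c <= 1 - (1 - alg2_success d k z eps Q) ^+ T.
Proof.
exists 1, (1 / 2); split; first exact: ltr01.
split; first by rewrite divr_gt0 // ltr0n.
move=> X d k z eps Q T dm k0 z0 zn eps0 FR hT.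
have [C [S [C0 Ck Sz rS]]] := ropt_wit d z k0 (ltn_trans z0 zn).
have lb := alg_lb dm k0 z0 zn eps0 FR C0 Ck Sz rS.
have ub := alg_ub d Q k0 z0 zn eps0 C0 Ck Sz.
set ps := alg2_success d k z eps Q in lb ub *.
set p := (1 - z%:R / #|X|%:R) * (eps / (1 + eps)) ^+ k.-1 in lb.
have n0 : 0 < #|X|%:R :> R by rewrite ltr0n; lia.
have g0 : 0 < 1 - z%:R / #|X|%:R :> R.
  have : z%:R / #|X|%:R < 1 :> R by rewrite ltr_pdivrMr // mul1r ltr_nat.
  lra.
have e1 : 0 < 1 + eps by lra.
have q0 : 0 < eps / (1 + eps) by apply: divr_gt0.
have p0 : 0 < p by apply: mulr_gt0 => //; apply: exprn_gt0.
have Tp : 1 <= T%:R * p.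
  move: hT; rewrite mul1r -[(1 + eps) / eps]invf_div exprVn -invfM -/p.
  move=> h; have := ler_wpM2r (ltW p0) h.
  by rewrite mulVf // gt_eqF.
case/andP: ub => ub0 ub1.
have pl1 : p <= 1 by apply: le_trans lb ub1.
have b := bern T (ltW p0) pl1.
have hpow : (1 - ps) ^+ T <= (1 - p) ^+ T.
  by apply: lerXn2r; rewrite ?nnegrE; lra.
have hp0 : 0 <= (1 - p) ^+ T by apply: exprn_ge0; lra.
have hh : (1 - p) ^+ T * 2 <= (1 - p) ^+ T * (1 + T%:R * p).
  by apply: ler_wpM2l => //; lra.
lra.
Qed.
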